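(* Let $n\ge1$, $L,G>0$ and $\eta>0$ with $\eta nL\le \frac12$. Let $a_1,\dots,a_n\in[0,L]$ and $b_1,\dots,b_n\in[-G,G]$ with $\sum_{i=1}^nb_i=0$. For a permutation $\sigma$ of $\{1,\dots,n\}$ define \[ X_\sigma=\sum_{j=1}^n\left(\prod_{i=j+1}^n(1-\eta a_{\sigma(i)})\right)b_{\sigma(j)} \] (an empty product equals $1$). If $\sigma$ is a uniformly random permutation, then \[ \big|\mathbb{E}_\sigma[X_\sigma]\big|\;\le\;2\eta nGL. \] *)

(* Defs.v *)
From HB Require Import structures.
From mathcomp Require Import all_boot all_order all_algebra all_fingroup.
Set Implicit Arguments. Unset Strict Implicit. Unset Printing Implicit Defensive.
Import Order.TTheory GRing.Theory Num.Theory.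
Local Open Scope ring_scope.

(* Indices are 0-based: {1..n} is 'I_n.  For j : 'I_n the product over
   i = j+1..n becomes the product over i : 'I_n with j < i. *)
Definition Xsigma (R : realFieldType) (n : nat) (eta : R) (a b : 'I_n -> R)
    (s : {perm 'I_n}) : R :=
  \sum_(j < n) (\prod_(i < n | (j < i)%N) (1 - eta * a (s i))) * b (s j).

Definition Eperm (R : realFieldType) (n : nat) (F : {perm 'I_n} -> R) : R :=
  (\sum_(s : {perm 'I_n}) F s) / #|{perm 'I_n}|%:R.

(* Main.v *)
Require Import Defs.
From HB Require Import structures.
From mathcomp Require Import all_boot all_order all_algebra all_fingroup.
From mathcomp Require Import ring lra.
Import Order.TTheory GRing.Theory Num.Theory.
Local Open Scope ring_scope.

Lemma prod_diff (R : realFieldType) (I : finType) (P : pred I) (x y : I -> R) :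
  (forall i, 0 <= x i <= 1) -> (forall i, 0 <= y i <= 1) ->
  `|\prod_(i | P i) x i - \prod_(i | P i) y i| <= \sum_(i | P i) `|x i - y i|.
Proof.
move=> hx hy.
suff: [/\ 0 <= \prod_(i | P i) x i <= 1, 0 <= \prod_(i | P i) y i <= 1 &
   `|\prod_(i | P i) x i - \prod_(i | P i) y i| <= \sum_(i | P i) `|x i - y i|].
  by case.
apply: (big_rec3 (fun p q s => [/\ 0 <= p <= 1, 0 <= q <= 1 & `|p - q| <= s])).
  by rewrite subrr normr0 ler01 lexx.
move=> i p q s _ [/andP[p0 p1] /andP[q0 q1] hs].
have /andP[x0 x1] := hx i; have /andP[y0 y1] := hy i.
split.
- by rewrite mulr_ge0 // mulr_ile1.
- by rewrite mulr_ge0 // mulr_ile1.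
have -> : x i * p - y i * q = x i * (p - q) + (x i - y i) * q by ring.
apply: (le_trans (ler_normD _ _)).
rewrite addrC normrM normrM (ger0_norm x0) (ger0_norm q0).
apply: lerD.
  by rewrite -[X in _ <= X]mulr1 ler_wpM2l // ?normr_ge0.
by apply: (le_trans _ hs); rewrite -[X in _ <= X]mul1r ler_wpM2r // normr_ge0.
Qed.

Theorem lemma8 (R : realFieldType) (n : nat) (L G eta : R) (a b : 'I_n -> R)
  (hn : (1 <= n)%N) (hL : 0 < L) (hG : 0 < G) (heta : 0 < eta)
  (hetan : eta * n%:R * L <= 1 / 2)
  (ha : forall i, 0 <= a i <= L)
  (hb : forall i, - G <= b i <= G)
  (hsum : \sum_(i < n) b i = 0) :
  `| Eperm (Xsigma eta a b) | <= 2 * eta * n%:R * G * L.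
Proof.
set c := fun u => 1 - eta * a u.
have etaL : eta * L <= 1 / 2.
  apply: le_trans hetan.
  rewrite -mulrA ler_pM2l // -[X in X <= _]mul1r.
  by apply: ler_wpM2r; [exact: ltW | rewrite ler1n].
have hc : forall u, 0 <= c u <= 1.
  move=> u; have /andP[a0 aL] := ha u; rewrite /c; apply/andP; split.
    rewrite subr_ge0; apply: (le_trans _ (le_trans etaL _)).
      by rewrite ler_pM2l.
    lra.
  by rewrite lerBlDr lerDl mulr_ge0 // ltW.
set F := fun v => \sum_(s : {perm 'I_n}) \prod_(i < n | (s^-1%g v < i)%N) c (s i).
have step1 : \sum_(s : {perm 'I_n}) Xsigma eta a b s = \sum_v b v * F v.
  rewrite /F; under [RHS]eq_bigr do rewrite mulr_sumr.
  rewrite [RHS]exchange_big /=; apply: eq_bigr => s _.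
  rewrite /Xsigma (reindex_inj (@perm_inj _ s^-1%g)) /=.
  by apply: eq_bigr => v _; rewrite permKV mulrC.
pose v0 : 'I_n := Ordinal hn.
have step2 : \sum_v b v * F v = \sum_v b v * (F v - F v0).
  under [RHS]eq_bigr do rewrite mulrBr.
  by rewrite sumrB -mulr_suml hsum mul0r subr0.
set N := #|{perm 'I_n}|%:R : R.
have Npos : 0 < N by rewrite ltr0n; apply/card_gt0P; exists 1%g.
have step3 : forall v, `|F v - F v0| <= N * (2 * eta * L).
  move=> v; pose t := tperm v v0.
  have -> : F v0 = \sum_(s : {perm 'I_n})
      \prod_(i < n | (s^-1%g v < i)%N) c (t (s i)).
    rewrite /F (reindex_inj (@mulIg _ t)) /=.
    apply: eq_bigr => s _.
    rewrite invgM tpermV permM tpermR; apply: eq_bigr => i _.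
    by rewrite permM.
  rewrite /F -sumrB; apply: (le_trans (ler_norm_sum _ _ _)).
  rewrite /N mulr_natl -sumr_const; apply: ler_sum => s _.
  apply: (le_trans (prod_diff _ _ _ _ _ (fun i => hc (s i)) (fun i => hc (t (s i))))).
  apply: (@le_trans _ _ (\sum_(i < n) `|c (s i) - c (t (s i))|)).
    rewrite [X in _ <= X](bigID (fun i : 'I_n => (s^-1%g v < i)%N)) /= lerDl.
    by apply: sumr_ge0 => i _; rewrite normr_ge0.
  rewrite (reindex_inj (@perm_inj _ s^-1%g)) /=.
  under eq_bigr do rewrite permKV.
  apply: (@le_trans _ _ (\sum_(u < n) eta * L * ((u == v)%:R + (u == v0)%:R))).
    apply: ler_sum => u _.
    have cb : forall u w, `|c u - c w| <= eta * L.
      move=> u1 w1; rewrite /c.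
      have /andP[h1 h2] := ha u1; have /andP[h3 h4] := ha w1.
      have e1 : eta * a u1 <= eta * L by rewrite ler_pM2l.
      have e2 : eta * a w1 <= eta * L by rewrite ler_pM2l.
      have e3 : 0 <= eta * a u1 by rewrite mulr_ge0 // ltW.
      have e4 : 0 <= eta * a w1 by rewrite mulr_ge0 // ltW.
      rewrite ler_norml; apply/andP; split; lra.
    have eL : 0 <= eta * L by rewrite mulr_ge0 // ltW.
    have [->|nv] := eqVneq u v.
      apply: (le_trans (cb _ _)); rewrite ler_peMr //.
      by have : 0 <= (v == v0)%:R :> R := ler0n _ _; rewrite /=; lra.
    have [->|nv0] := eqVneq u v0.
      apply: (le_trans (cb _ _)); rewrite ler_peMr //.
      by have : 0 <= (v0 == v)%:R :> R := ler0n _ _; rewrite /=; lra.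
    by rewrite tpermD 1?eq_sym // subrr normr0 mulr_ge0 // ?addr_ge0 ?ler0n ?mulr_ge0 // ltW.
  rewrite -mulr_sumr big_split /=.
  have one : forall w : 'I_n, \sum_(u < n) (u == w)%:R = 1 :> R.
    move=> w; rewrite (bigD1 w) //= eqxx big1 ?addr0 // => u /negPf -> //.
  by rewrite !one; nra.
rewrite /Eperm step1 step2 normrM normfV (gtr0_norm Npos) ler_pdivrMr //.
apply: (le_trans (ler_norm_sum _ _ _)).
apply: (@le_trans _ _ (\sum_(v < n) G * (N * (2 * eta * L)))).
  apply: ler_sum => v _; rewrite normrM; apply: ler_pM => //.
  - by have /andP[? ?] := hb v; rewrite ler_norml; apply/andP; split.
rewrite sumr_const card_ord -[_ *+ n]mulr_natr.
rewrite le_eqVlt; apply/orP; left; apply/eqP; ring.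
Qed.
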